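(* Let $\pi$ be a uniformly random permutation of $\{1,\dots,m\}$, viewed as an instance of the fully labeled one-dimensional rearrangement problem (LOR). Let $D_S(\pi)$ be the end-effector travel of the plan produced by SweepCyclesLOR, and let $D^*(\pi)$ be the minimum end-effector travel over all valid plans for $\pi$ that use the minimum possible number of pick-n-swaps. Then SweepCyclesLOR minimizes the number of pick-n-swaps and its travel is optimal in the asymptotic sense in expectation: $\mathbb E[D_S(\pi)]/\mathbb E[D^*(\pi)]\to 1$ as $m\to\infty$.
   Context: Setting (LOR). A row of $m$ cells $1,\dots,m$, cell $i$ located at the point $i$ on the real line. Each cell initially holds exactly one item; items carry distinct labels $1,\dots,m$. An instance is a permutation $\pi$ of $\{1,\dots,m\}$, where $\pi_i$ is the label of the item initially in cell $i$; the goal is that item $i$ ends in cell $i$ for every $i$. A robot end-effector can hold at most one item; it starts at the rest position $p_0=$ cell $1$ holding nothing. A pick-n-swap operation performed at a cell $p$ is: if the end-effector holds nothing, pick up the item in $p$; if it holds an item and $p$ contains an item, exchange the two; if it holds an item and $p$ is empty, put the held item into $p$. A plan is a sequence $P=(p_0,p_1,\dots,p_N)$ of cells: the end-effector travels from $p_0$ to $p_1$, performs a pick-n-swap there, travels to $p_2$, and so on, and finally returns to $p_{N+1}:=p_0$. It is valid if at the end every item $i$ is in cell $i$ and the end-effector holds nothing. $N$ is the number of pick-n-swaps and the end-effector travel is $D(P)=\sum_{i=0}^{N}|p_i-p_{i+1}|$. SweepCyclesLOR: while some cell $i$ holds an item with label $\ne i$, let $i$ be the smallest such cell; go to $i$ and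 pick up its item, say with label $g$; while $g\neq i$, go to cell $g$ and swap (item $g$ is placed in cell $g$ and the item previously in cell $g$, with label $g'$, becomes held; set $g:=g'$); finally go to cell $i$ and place the held item. When no misplaced item remains, return to cell $1$. *)

(* Defs.v *)
From Stdlib Require Import ClassicalEpsilon.
From mathcomp Require Import all_boot all_order all_algebra all_fingroup.
Set Implicit Arguments. Unset Strict Implicit. Unset Printing Implicit Defensive.

(* Conventions: the m = n.+1 cells 1..m are represented by 'I_n.+1 = {0..n}
   (cell i+1 of the paper is ordinal i); labels likewise.  Since only
   differences of positions matter, travel distances are unchanged.
   The rest position (cell 1) is ord0. *)

Section LOR.
Variable n : nat.
Notation cell := 'I_n.+1.

(* arrangement: content of each cell (None = empty) *)
Definition arrangement := cell -> option cell.

Definition upd (a : arrangement) (p : cell) (v : option cell) : arrangement :=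
  fun j => if j == p then v else a j.

(* state = (arrangement, item held by the end-effector) *)
Definition state := (arrangement * option cell)%type.

(* pick-n-swap at p: the held content (possibly nothing) and the content of p
   are exchanged.  This covers the three cases: pick (hold nothing),
   swap (both items), place (cell p empty). *)
Definition pick_n_swap (s : state) (p : cell) : state :=
  (upd s.1 p s.2, s.1 p).

Definition init_state (pi : 'S_n.+1) : state := (fun i => Some (pi i), None).

Definition run (pi : 'S_n.+1) (plan : seq cell) : state :=
  foldl pick_n_swap (init_state pi) plan.

(* a plan (p_1, ..., p_N) (the rest position p_0 = ord0 is implicit) is valid *)
Definition valid (pi : 'S_n.+1) (plan : seq cell) : bool :=
  [forall i : cell, (run pi plan).1 i == Some i] && ((run pi plan).2 == None).

Definition dist (a b : cell) : nat := (a - b) + (b - a).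

Definition travel (plan : seq cell) : nat :=
  sumn (pairmap dist ord0 (rcons plan ord0)).

(* classical minimum of a predicate on nat (0 if empty) *)
Definition minval (P : pred nat) : nat :=
  match excluded_middle_informative (exists k, P k) with
  | left h => ex_minn h
  | right _ => 0
  end.

Definition Nmin (pi : 'S_n.+1) : nat :=
  minval (fun N => [exists t : N.-tuple cell, valid pi t]).

Definition Dstar (pi : 'S_n.+1) : nat :=
  minval (fun d => [exists t : (Nmin pi).-tuple cell, valid pi t && (travel t == d)]).

(* inner loop: holding label g, starting cell i; returns visited cells and
   the new arrangement *)
Fixpoint follow (fuel : nat) (i : cell) (a : arrangement) (g : cell)
  : seq cell * arrangement :=
  match fuel with
  | 0 => ([::], a)
  | k.+1 =>
    if g == i then ([:: i], upd a i (Some g))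
    else match a g with
         | Some g' => let r := follow k i (upd a g (Some g)) g' in (g :: r.1, r.2)
         | None => ([:: g], upd a g (Some g))
         end
  end.

(* smallest misplaced cell, if any (enum 'I_ is increasing) *)
Definition first_misplaced (a : arrangement) : option cell :=
  ohead [seq i <- enum 'I_n.+1 | a i != Some i].

Fixpoint sweep_aux (fuel : nat) (a : arrangement) : seq cell :=
  match fuel with
  | 0 => [::]
  | f.+1 =>
    match first_misplaced a with
    | None => [::]
    | Some i =>
      match a i with
      | None => [::]
      | Some g =>
        let r := follow n.+1 i (upd a i None) g in
        i :: r.1 ++ sweep_aux f r.2
      end
    end
  end.

(* the plan produced by SweepCyclesLOR (fuel n.+1 suffices: at most m cycles,
   each of length at most m) *)
Definition sweep (pi : 'S_n.+1) : seq cell := sweep_aux n.+1 (init_state pi).1.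

Definition expect (X : 'S_n.+1 -> nat) : rat :=
  ((\sum_(pi : 'S_n.+1) (X pi)%:R) / (n.+1)`!%:R)%R.

End LOR.

(* Main.v *)
Require Import Defs.
From mathcomp Require Import all_boot all_order all_algebra all_fingroup.
From mathcomp Require Import zify.
From Stdlib Require Import ClassicalEpsilon.
Import GRing.Theory Num.Theory.
Set Implicit Arguments. Unset Strict Implicit. Unset Printing Implicit Defensive.


Lemma tri_sum m : 2 * \sum_(j < m) (m - j) = m * m.+1.
Proof.
elim: m => [|m IH]; first by rewrite big_ord0.
rewrite big_ord_recr /=.
rewrite (eq_bigr (fun j : 'I_m => (m - j) + 1)); last first.
  by move=> j _; have : j < m := ltn_ord j; nia.
rewrite big_split /= sum1_card card_ord; move: IH; set X := \sum_(i < m) (m - i); nia.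
Qed.

Lemma sq_sum m : 3 * \sum_(j < m) \sum_(k < m) ((j - k) + (k - j)) + m = m ^ 3.
Proof.
elim: m => [|m IH]; first by rewrite big_ord0.
rewrite big_ord_recr /=.
rewrite (eq_bigr (fun j : 'I_m => \sum_(k < m) ((j - k) + (k - j)) + (m - j))); last first.
  move=> j _; rewrite big_ord_recr /=.
  have : j < m := ltn_ord j; nia.
rewrite big_split /= big_ord_recr /=.
have -> : \sum_(k < m) (m - k + (k - m)) = \sum_(k < m) (m - k).
  by apply: eq_bigr => k _; have : k < m := ltn_ord k; lia.
move: IH; have := tri_sum m.
set X := \sum_(i < m) (m - i); set Y := \sum_(i < m) _; nia.
Qed.

Section Proofs.
Variable n : nat.
Notation cell := 'I_n.+1.
Notation pns := (@pick_n_swap n).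

Definition sf (s : state n) : option cell -> option cell :=
  fun o => if o is Some j then s.1 j else s.2.

Lemma sf_pns s p : sf (pns s p) =1 sf s \o tperm None (Some p).
Proof.
case=> [j|] /=; rewrite /pick_n_swap /upd /=.
  case: eqP => [->|/eqP hj]; first by rewrite tpermR.
  by rewrite tpermD // eq_sym.
by rewrite tpermL.
Qed.

Lemma inj_pns s p : injective (sf s) -> injective (sf (pns s p)).
Proof. by move=> H x y; rewrite !sf_pns => /H /perm_inj. Qed.

Definition psig (s : state n) : {perm option cell} :=
  insubd (1%g : {perm option cell}) [ffun o => sf s o].

Lemma psigE s : injective (sf s) -> psig s =1 sf s.
Proof.
move=> H x; have Hi : injectiveb [ffun o => sf s o].
  by apply/injectiveP => u v; rewrite !ffunE => /H.
by rewrite /psig -pvalE; have := insubdK (1%g : {perm option cell}) Hi; rewrite /= => ->; rewrite ffunE.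
Qed.

Definition cyc s := #|porbits (psig s)|.
Definition fx (s : state n) := \sum_(j : cell) (s.1 j == Some j : nat).

Lemma psig_pns s p : injective (sf s) ->
  psig (pns s p) = (tperm None (Some p) * psig s)%g.
Proof.
move=> H; apply/permP => x; rewrite permM psigE; last exact: inj_pns.
by rewrite sf_pns /= psigE.
Qed.

Lemma cyc_pns s p : injective (sf s) ->
  cyc (pns s p) + (None \notin porbit (psig s) (Some p)).*2 = cyc s + 1.
Proof.
move=> H; rewrite /cyc psig_pns //.
by have := porbits_mul_tperm (psig s) None (Some p).
Qed.

Lemma fx_pns s p : fx (pns s p) + (s.1 p == Some p) = fx s + (s.2 == Some p).
Proof.
rewrite /fx (bigD1 p) //= [in RHS](bigD1 p) //= /upd eqxx.
rewrite (eq_bigr (fun j => (s.1 j == Some j : nat))); first by lia.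
by move=> j /negPf ->.
Qed.

Lemma cyc_ext s t : injective (sf s) -> injective (sf t) -> sf s =1 sf t -> cyc s = cyc t.
Proof.
move=> Hs Ht E; rewrite /cyc; congr (#|porbits _|); apply/permP => x.
by rewrite !psigE.
Qed.

Lemma fx_ext (s t : state n) : s.1 =1 t.1 -> fx s = fx t.
Proof. by move=> E; apply: eq_bigr => j _; rewrite E. Qed.

Definition goodstep (s : state n) p :=
  ((s.2 == None) && (s.1 p != Some p)) || (s.2 == Some p).

Fixpoint goodplan s l := if l is p :: l' then goodstep s p && goodplan (pns s p) l' else true.

Lemma goodplan_cat s l1 l2 :
  goodplan s (l1 ++ l2) = goodplan s l1 && goodplan (foldl pns s l1) l2.
Proof. by elim: l1 s => //= p l IH s; rewrite IH andbA. Qed.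

Lemma step_lb s p : injective (sf s) ->
  cyc s + 2 * fx (pns s p) <= cyc (pns s p) + 2 * fx s + 1.
Proof.
move=> H; have C := cyc_pns p H; have F := fx_pns s p.
case: (eqVneq s.2 (Some p)) => h2.
  have h1 : (s.1 p == Some p) = false.
    apply/negbTE/eqP => E; suff : sf s None = sf s (Some p) by move/H.
    by rewrite /= h2 E.
  rewrite h1 in F. 
  have : None \in porbit (psig s) (Some p).
    rewrite porbit_sym; apply/porbitP; exists 1%N.
    by rewrite expg1 psigE //= h2.
  move=> Hin; rewrite Hin /= in C; lia.
move: C F; rewrite (negbTE h2) /=; case: (_ \notin _); case: (_ == _) => /=; lia.
Qed.

Lemma step_good s p : injective (sf s) -> goodstep s p ->
  cyc s + 2 * fx (pns s p) = cyc (pns s p) + 2 * fx s + 1.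
Proof.
move=> H; have C := cyc_pns p H; have F := fx_pns s p.
case/orP => [/andP [/eqP h2 h1] | /eqP h2].
  rewrite h2 (negbTE h1) /= in F.
  have : None \notin porbit (psig s) (Some p).
    rewrite porbit_sym; apply/porbitP => -[i]; apply/eqP.
    suff -> : ((psig s ^+ i)%g None) = None by [].
    elim: i => [|i IH]; first by rewrite expg0 perm1.
    by rewrite expgSr permM IH psigE //= h2.
  move=> Hin; rewrite Hin /= in C; lia.
have h1 : (s.1 p == Some p) = false.
  apply/negbTE/eqP => E; suff : sf s None = sf s (Some p) by move/H.
  by rewrite /= h2 E.
rewrite h1 h2 eqxx in F.
have : None \in porbit (psig s) (Some p).
  rewrite porbit_sym; apply/porbitP; exists 1%N.
  by rewrite expg1 psigE //= h2.
move=> Hin; rewrite Hin /= in C; lia.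
Qed.

Lemma plan_lb s l : injective (sf s) ->
  cyc s + 2 * fx (foldl pns s l) <= cyc (foldl pns s l) + 2 * fx s + size l.
Proof.
elim: l s => [|p l IH] s H /=; first lia.
have := @step_lb s p H; have := IH _ (@inj_pns s p H); lia.
Qed.

Lemma plan_good s l : injective (sf s) -> goodplan s l ->
  cyc s + 2 * fx (foldl pns s l) = cyc (foldl pns s l) + 2 * fx s + size l.
Proof.
elim: l s => [|p l IH] s H /=; first lia.
case/andP => g1 g2.
have := @step_good s p H g1; have := IH _ (@inj_pns s p H) g2; lia.
Qed.


Definition pd (j : cell) (o : option cell) := if o is Some x then dist j x else 0.
Definition Psi (s : state n) (q : cell) := \sum_(j : cell) pd j (s.1 j) + pd q s.2.

Lemma Psi_pns s p : Psi (pns s p) p = Psi s p.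
Proof.
rewrite /Psi (bigD1 p) //= [in RHS](bigD1 p) //= /upd eqxx.
rewrite (eq_bigr (fun j => pd j (s.1 j))); first by lia.
by move=> j /negPf ->.
Qed.

Lemma dist_tri (a b c : cell) : dist a c <= dist a b + dist b c.
Proof. rewrite /dist; lia. Qed.

Lemma distxx (a : cell) : dist a a = 0.
Proof. rewrite /dist; lia. Qed.

Lemma Psi_move s p q : Psi s p <= dist p q + Psi s q.
Proof.
rewrite /Psi; case: s.2 => [x|] /=; last lia.
have := dist_tri p q x; lia.
Qed.

Lemma Psi_hold s p x : s.2 = Some x -> Psi s p = dist p x + Psi s x.
Proof. by rewrite /Psi => -> /=; rewrite distxx; lia. Qed.

Lemma Psi_none (a : arrangement n) p q : Psi (a, None) p = Psi (a, None) q.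
Proof. by []. Qed.

Definition psum (p : cell) (l : seq cell) := sumn (pairmap (@dist n) p l).

Lemma psum_cat p l1 l2 : psum p (l1 ++ l2) = psum p l1 + psum (last p l1) l2.
Proof. rewrite /psum; elim: l1 p => //= x l IH p; rewrite IH; lia. Qed.

Lemma travel_lb_gen s p l :
  Psi s p <= psum p (rcons l ord0) + Psi (foldl pns s l) ord0.
Proof.
elim: l s p => [|x l IH] s p /=.
  by rewrite /psum /=; have := Psi_move s p ord0; lia.
rewrite /psum /= -/(psum _ _).
have := Psi_move s p x; rewrite -(Psi_pns s x); have := IH (pns s x) x; lia.
Qed.

Definition mis (a : arrangement n) := \sum_(j : cell) (a j != Some j : nat).

Lemma follow_ok k i b g :
  injective (sf (b, Some g)) -> b i = None -> mis b <= k ->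
  let r := follow k i b g in
  [/\ foldl pns (b, Some g) r.1 = (r.2, None), goodplan (b, Some g) r.1,
      forall x, last x r.1 = i,
      (forall j, b j = Some j -> r.2 j = Some j) /\ r.2 i = Some i &
      forall p, psum p r.1 + Psi (r.2, None) ord0 = Psi (b, Some g) p].
Proof.
elim: k b g => [|k IH] b g Hinj Hbi Hmis /=.
  move: Hmis; rewrite /mis (bigD1 i) //= Hbi /=; lia.
case: (eqVneq g i) => [->|hgi].
  split => //=.
  - by rewrite /pick_n_swap /= Hbi.
  - by rewrite /goodstep /= eqxx ?orbT ?andbT.
  - split; last by rewrite /upd eqxx.
    by move=> j Hj; rewrite /upd; case: eqP => // E; subst j; rewrite Hbi in Hj.
  move=> p; rewrite /psum /= addn0 (Psi_hold p (erefl (Some i) : (b, Some i).2 = Some i)).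
  rewrite -(Psi_pns (b, Some i) i) /pick_n_swap /= Hbi; congr (_ + _).
case Hbg: (b g) => [g'|]; last first.
  have : sf (b, Some g) (Some g) = sf (b, Some g) (Some i) by rewrite /= Hbg Hbi.
  by move/Hinj => [] /eqP; rewrite (negbTE hgi).
have Hps : pns (b, Some g) g = (upd b g (Some g), Some g') by rewrite /pick_n_swap /= Hbg.
have Hinj' : injective (sf (upd b g (Some g), Some g')).
  by rewrite -Hps; apply: inj_pns.
have Hbi' : upd b g (Some g) i = None by rewrite /upd eq_sym (negbTE hgi).
have Hgg : b g != Some g.
  apply/eqP => E; have : sf (b, Some g) None = sf (b, Some g) (Some g) by rewrite /= E.
  by move/Hinj.
have Hmis' : mis (upd b g (Some g)) <= k.
  have E : \sum_(j | j != g) ((upd b g (Some g) j) != Some j : nat) =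
           \sum_(j | j != g) (b j != Some j : nat).
    by apply: eq_bigr => j /negPf; rewrite /upd => ->.
  move: Hmis; rewrite /mis (bigD1 g) //= Hgg [X in X <= k](bigD1 g) //= E.
  rewrite {1}/upd eqxx eqxx /=; lia.
have [H1 H2 H3 [H4 H5] H6] := IH _ _ Hinj' Hbi' Hmis'.
split => /=.
- by rewrite Hps.
- by rewrite /goodstep /= eqxx ?orbT ?andbT Hps.
- by move=> x; apply: H3.
- split => // j Hj; apply: H4; rewrite /upd; case: eqP => [->|//]; done.
move=> p; rewrite /psum /= -/(psum _ _) -addnA H6.
rewrite (Psi_hold p (erefl (Some g) : (b, Some g).2 = Some g)) -(Psi_pns (b, Some g) g) Hps.
by [].
Qed.

Lemma inj_foldl s l : injective (sf s) -> injective (sf (foldl pns s l)).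
Proof. elim: l s => //= p l IH s H; apply: IH; exact: inj_pns. Qed.

Lemma enum_sorted : sorted (relpre val ltn) (enum 'I_n.+1).
Proof. by rewrite -sorted_map val_enum_ord iota_ltn_sorted. Qed.

Lemma first_mis_none (a : arrangement n) :
  first_misplaced a = None -> forall j, a j = Some j.
Proof.
rewrite /first_misplaced => H j; apply/eqP/negPn/negP => Hj.
have : j \in [seq i <- enum 'I_n.+1 | a i != Some i] by rewrite mem_filter Hj mem_enum.
by case: [seq i <- enum 'I_n.+1 | a i != Some i] H.
Qed.

Lemma first_mis_some (a : arrangement n) i :
  first_misplaced a = Some i -> a i != Some i /\ forall j : cell, j < i -> a j = Some j.
Proof.
rewrite /first_misplaced.
have Hs := sorted_filter (fun a b c => @ltn_trans (val a) (val b) (val c))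
               (fun j => a j != Some j) enum_sorted.
have Hm : forall j, (j \in [seq i <- enum 'I_n.+1 | a i != Some i]) = (a j != Some j).
  by move=> j; rewrite mem_filter mem_enum andbT.
move: Hs Hm; case: [seq i <- enum 'I_n.+1 | a i != Some i] => //= x s Hs Hm [<-].
split; first by rewrite -Hm mem_head.
move=> j Hj; apply/eqP/negPn/negP => Hn; rewrite -Hm in_cons in Hn.
case/orP: Hn => [/eqP E|Hn]; first by rewrite E ltnn in Hj.
have := order_path_min (fun a b c => @ltn_trans (val a) (val b) (val c)) Hs.
move/allP/(_ j Hn) => /=; rewrite ltnNge (ltnW Hj) //.
Qed.

Lemma mis_le (a : arrangement n) : mis a <= n.+1.
Proof.
rewrite /mis -[X in _ <= X]card_ord -sum1_card; apply: leq_sum => j _; exact: leq_b1.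
Qed.

Lemma sweep_ok f (a : arrangement n) (p : cell) :
  injective (sf (a, None)) -> mis a <= f -> (forall j : cell, j < p -> a j = Some j) ->
  let l := sweep_aux f a in
  [/\ (forall j, (foldl pns (a, None) l).1 j = Some j), (foldl pns (a, None) l).2 = None,
      goodplan (a, None) l & psum p (rcons l ord0) + p <= Psi (a, None) ord0 + 2 * n].
Proof.
have base : forall (a : arrangement n) (p : cell), (forall j, a j = Some j) ->
  [/\ (forall j, (foldl pns (a, None) [::]).1 j = Some j), (foldl pns (a, None) [::]).2 = None,
      goodplan (a, None) [::] & psum p (rcons [::] ord0) + p <= Psi (a, None) ord0 + 2 * n].
  move=> a0 p0 H; split => //=; rewrite /psum /= /dist.
  have h0 : nat_of_ord (@ord0 n) = 0 by [].
  have := ltn_ord p0; lia.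
elim: f a p => [|f IH] a p Hinj Hmis Hlt.
  apply: base => j; move: Hmis; rewrite /mis (bigD1 j) //=.
  by case: eqP => //= _; lia.
have -> : sweep_aux f.+1 a = match first_misplaced a with
    | None => [::]
    | Some i => match a i with
      | None => [::]
      | Some g => let r := follow n.+1 i (upd a i None) g in i :: r.1 ++ sweep_aux f r.2
      end end by [].
case Hfm: (first_misplaced a) => [i|]; last by apply: base; apply: first_mis_none.
have [Hai Hlti] := first_mis_some Hfm.
case Hai': (a i) => [g|]; last first.
  have : sf (a, None) (Some i) = sf (a, None) None by rewrite /= Hai'.
  by move/Hinj.
set b := upd a i None.
have Hps : pns (a, None) i = (b, Some g) by rewrite /pick_n_swap /= Hai'.
have Hinjb : injective (sf (b, Some g)) by rewrite -Hps; apply: inj_pns.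
have Hbi : b i = None by rewrite /b /upd eqxx.
have [F1 F2 F3 [F4 F5] F6] := follow_ok Hinjb Hbi (mis_le b).
set r := follow n.+1 i b g in F1 F2 F3 F4 F5 F6 *.
have Hinj2 : injective (sf (r.2, None)) by rewrite -F1; apply: inj_foldl.
have Hfix : forall j, j != i -> a j = Some j -> r.2 j = Some j.
  by move=> j Hji Hj; apply: F4; rewrite /b /upd (negbTE Hji).
have Hmis2 : mis r.2 <= f.
  move: Hmis; rewrite /mis (bigD1 i) //= [X in X <= f](bigD1 i) //= F5 eqxx Hai /=.
  rewrite add1n ltnS add0n => H; apply: leq_trans H.
  apply: leq_sum => j Hji; case: (eqVneq (a j) (Some j)) => [E|E] /=.
    by rewrite Hfix // eqxx.
  by rewrite leq_b1.
have Hlt2 : forall j : cell, j < i -> r.2 j = Some j.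
  by move=> j Hj; apply: Hfix; [rewrite neq_ltn Hj | apply: Hlti].
have [G1 G2 G3 G4] := IH r.2 i Hinj2 Hmis2 Hlt2.
have Hpi : p <= i by rewrite leqNgt; apply/negP => /Hlt Hi; rewrite Hi eqxx in Hai.
split.
- by move=> j; rewrite /= Hps foldl_cat F1.
- by rewrite /= Hps foldl_cat F1.
- by rewrite /= /goodstep /= Hai Hps goodplan_cat F2 F1 G3.
have psum_cons : forall (q x : cell) l, psum q (x :: l) = dist q x + psum x l by [].
rewrite rcons_cons rcons_cat psum_cons psum_cat F3.
have := F6 i; rewrite -Hps Psi_pns.
have -> : Psi (a, None) i = Psi (a, None) ord0 by [].
move: G4; rewrite /dist; lia.
Qed.

Lemma inj_init (pi : 'S_n.+1) : injective (sf (init_state pi)).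
Proof. by case=> [x|] [y|] //= [] /perm_inj ->. Qed.

Lemma valid_fin (pi : 'S_n.+1) l : valid pi l ->
  (forall j, (run pi l).1 j = Some j) /\ (run pi l).2 = None.
Proof. by case/andP => /forallP H /eqP H2; split => // j; apply/eqP. Qed.

Lemma sweep_props (pi : 'S_n.+1) :
  [/\ valid pi (sweep pi), goodplan (init_state pi) (sweep pi) &
      travel (sweep pi) <= Psi (init_state pi) ord0 + 2 * n].
Proof.
have [] := @sweep_ok n.+1 (init_state pi).1 ord0 (@inj_init pi) (mis_le _) (fun j (h : j < 0) => False_ind _ (notF h)).
move=> H1 H2 H3 H4; split => //.
- by apply/andP; split; [apply/forallP => j; apply/eqP; apply: H1 | apply/eqP].
- by move: H4; rewrite addn0.
Qed.

Lemma sweep_min (pi : 'S_n.+1) plan : valid pi plan -> size (sweep pi) <= size plan.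
Proof.
move=> Hv; have [Hs Hg _] := sweep_props pi.
have E1 := plan_good (@inj_init pi) Hg.
have E2 := plan_lb plan (@inj_init pi).
have [A1 A2] := valid_fin Hs; have [B1 B2] := valid_fin Hv.
have Hc : cyc (foldl pns (init_state pi) (sweep pi)) = cyc (foldl pns (init_state pi) plan).
  apply: cyc_ext; try exact: inj_foldl (@inj_init pi).
  by case=> [j|] /=; [move: A1 B1; rewrite /run => -> -> | move: A2 B2; rewrite /run => -> ->].
have Hf : fx (foldl pns (init_state pi) (sweep pi)) = fx (foldl pns (init_state pi) plan).
  by apply: fx_ext => j; move: A1 B1; rewrite /run => -> ->.
lia.
Qed.

Definition Psi0 (pi : 'S_n.+1) := Psi (init_state pi) ord0.

Lemma travel_lb (pi : 'S_n.+1) plan : valid pi plan -> Psi0 pi <= travel plan.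
Proof.
move=> Hv; have [B1 B2] := valid_fin Hv.
have := travel_lb_gen (init_state pi) ord0 plan.
have -> : Psi (foldl pns (init_state pi) plan) ord0 = 0.
  rewrite /Psi; move: B1 B2; rewrite /run => B1 ->; rewrite addn0.
  by apply: big1 => j _; rewrite B1 /= distxx.
by rewrite addn0.
Qed.

Lemma minval_spec (P : pred nat) : (exists k, P k) -> P (minval P) /\ forall k, P k -> minval P <= k.
Proof.
move=> H; rewrite /minval; case: excluded_middle_informative => [h|/(_ H)//].
by case: ex_minnP.
Qed.

Lemma Nmin_eq (pi : 'S_n.+1) : Nmin pi = size (sweep pi).
Proof.
have [Hs _ _] := sweep_props pi.
have Hex : exists k, [exists t : k.-tuple cell, valid pi t].
  by exists (size (sweep pi)); apply/existsP; exists (in_tuple (sweep pi)).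
have [/existsP [t Ht] Hm] := minval_spec Hex.
apply/eqP; rewrite eqn_leq; apply/andP; split.
  by apply: Hm; apply/existsP; exists (in_tuple (sweep pi)).
by rewrite /Nmin -(size_tuple t); apply: sweep_min.
Qed.

Lemma Dstar_bounds (pi : 'S_n.+1) : Psi0 pi <= Dstar pi <= travel (sweep pi).
Proof.
have [Hs _ _] := sweep_props pi.
have Hsz : size (sweep pi) == Nmin pi by rewrite Nmin_eq.
have Hex : exists d, [exists t : (Nmin pi).-tuple cell, valid pi t && (travel t == d)].
  by exists (travel (sweep pi)); apply/existsP; exists (Tuple Hsz); rewrite /= Hs eqxx.
have [/existsP [t /andP [Ht /eqP Htr]] Hm] := minval_spec Hex.
rewrite /Dstar -Htr travel_lb //= Htr.
by apply: Hm; apply/existsP; exists (Tuple Hsz); rewrite /= Hs eqxx.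
Qed.

Lemma cnt_eq (j k : cell) :
  \sum_(pi : 'S_n.+1) (pi j == k : nat) = \sum_(pi : 'S_n.+1) (pi j == j : nat).
Proof.
rewrite (reindex_inj (mulIg (tperm j k))); apply: eq_bigr => pi _.
by rewrite permM -[X in _ == X](tpermL j k) (inj_eq perm_inj).
Qed.

Lemma pick1 (pi : 'S_n.+1) (j : cell) (F : cell -> nat) :
  \sum_(k : cell) (pi j == k) * F k = F (pi j).
Proof.
rewrite (bigD1 (pi j)) //= eqxx mul1n big1 ?addn0 // => k hk.
by rewrite eq_sym (negbTE hk).
Qed.

Lemma cnt_tot (j : cell) : n.+1 * \sum_(pi : 'S_n.+1) (pi j == j : nat) = #|{perm cell}|.
Proof.
have -> : #|{perm cell}| = \sum_(pi : 'S_n.+1) \sum_(k : cell) (pi j == k : nat).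
  rewrite -sum1_card; apply: eq_big => // pi _.
  by rewrite -(pick1 pi j (fun _ => 1)); apply: eq_bigr => k _; rewrite muln1.
rewrite exchange_big /= (eq_bigr (fun k => \sum_(pi : 'S_n.+1) (pi j == j : nat))).
  by rewrite sum_nat_const card_ord.
by move=> k _; exact: cnt_eq.
Qed.

Lemma col_sum (j : cell) :
  n.+1 * \sum_(pi : 'S_n.+1) dist j (pi j) = #|{perm cell}| * \sum_(k : cell) dist j k.
Proof.
rewrite (eq_bigr (fun pi : 'S_n.+1 => \sum_(k : cell) (pi j == k) * dist j k)); last first.
  by move=> pi _; rewrite pick1.
rewrite exchange_big /=.
rewrite (eq_bigr (fun k : cell => (\sum_(pi : 'S_n.+1) (pi j == k : nat)) * dist j k)); last first.
  by move=> k _; rewrite big_distrl.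
under eq_bigr do rewrite cnt_eq.
by rewrite -big_distrr /= mulnA cnt_tot.
Qed.

Lemma Psi0E (pi : 'S_n.+1) : Psi0 pi = \sum_(j : cell) dist j (pi j).
Proof. by rewrite /Psi0 /Psi addn0. Qed.

Lemma sumA_eq : 3 * \sum_(pi : 'S_n.+1) Psi0 pi = #|{perm cell}| * (n * n.+2).
Proof.
have H : n.+1 * \sum_(pi : 'S_n.+1) Psi0 pi =
         #|{perm cell}| * \sum_(j : cell) \sum_(k : cell) dist j k.
  under eq_bigr do rewrite Psi0E.
  rewrite exchange_big big_distrr /= big_distrr /=; apply: eq_bigr => j _.
  exact: col_sum.
have S := sq_sum n.+1.
have E : \sum_(j : cell) \sum_(k : cell) dist j k =
         \sum_(j < n.+1) \sum_(k < n.+1) ((j - k) + (k - j)) by [].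
rewrite -E in S.
apply/eqP; rewrite -(eqn_pmul2l (ltn0Sn n)); apply/eqP.
move: H S; set A := \sum_(pi : 'S_n.+1) Psi0 pi; set B := \sum_(j : cell) _; set N := #|_|.
nia.
Qed.

End Proofs.

From mathcomp Require Import ring lra.
Import Order.TTheory GRing.Theory Num.Theory.
Local Open Scope ring_scope.

Theorem proposition2 :
  (forall (n : nat) (pi : 'S_n.+1),
      valid pi (sweep pi) /\
      (forall plan : seq 'I_n.+1, valid pi plan -> (size (sweep pi) <= size plan)%N))
  /\
  (forall eps : rat, 0 < eps ->
     exists M : nat, forall n : nat, (M <= n)%N ->
       `| expect (fun pi : 'S_n.+1 => travel (sweep pi))
            / expect (fun pi : 'S_n.+1 => Dstar pi) - 1 | < eps).
Proof.
split.
  move=> n pi; split; first by case: (sweep_props pi).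
  by move=> plan; apply: sweep_min.
move=> eps heps.
have hb := @archi_boundP _ (6 / eps) (ltW (divr_gt0 (ltr0n _ 6) heps)).
exists (Num.bound (6 / eps)).+1 => n hn.
set A := (\sum_(pi : 'S_n.+1) Psi0 pi)%N.
set D := (\sum_(pi : 'S_n.+1) Dstar pi)%N.
set S := (\sum_(pi : 'S_n.+1) travel (sweep pi))%N.
set N := #|{perm 'I_n.+1}|.
have hAD : (A <= D)%N by apply: leq_sum => pi _; case/andP: (Dstar_bounds pi).
have hDS : (D <= S)%N by apply: leq_sum => pi _; case/andP: (Dstar_bounds pi).
have hS : (S <= A + N * (2 * n))%N.
  have -> : (N * (2 * n) = \sum_(pi : 'S_n.+1) (2 * n))%N by rewrite sum_nat_const.
  rewrite /A -big_split /=; apply: leq_sum => pi _.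
  by case: (sweep_props pi).
have h3 := @sumA_eq n; rewrite -/A -/N in h3.
have hN : (0 < N)%N by apply/card_gt0P; exists 1%g.
have hn1 : (1 <= n)%N by apply: leq_trans hn.
have hD : (0 < D)%N by apply: leq_trans hAD; nia.
have key : ((S - D) * n.+2 <= 6 * D)%N by nia.
have E1 : expect (fun pi : 'S_n.+1 => travel (sweep pi)) = S%:R / (n.+1)`!%:R.
  by rewrite /expect natr_sum.
have E2 : expect (fun pi : 'S_n.+1 => Dstar pi) = D%:R / (n.+1)`!%:R.
  by rewrite /expect natr_sum.
rewrite E1 E2.
have f0 : (n.+1)`!%:R != 0 :> rat by rewrite pnatr_eq0 -lt0n fact_gt0.
have d0 : D%:R != 0 :> rat by rewrite pnatr_eq0 -lt0n.
have -> : S%:R / (n.+1)`!%:R / (D%:R / (n.+1)`!%:R) - 1 = (S - D)%:R / D%:R :> rat.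
  by rewrite natrB //; field; rewrite d0 f0.
rewrite ger0_norm ?divr_ge0 ?ler0n //.
apply: le_lt_trans (_ : _ <= 6%:R / n.+2%:R) _.
  rewrite ler_pdivrMr ?ltr0n // mulrAC ler_pdivlMr ?ltr0n // -!natrM ler_nat.
  exact: key.
rewrite ltr_pdivrMr ?ltr0n //.
have h1 : 6 / eps < n.+2%:R.
  by apply: lt_le_trans hb _; rewrite ler_nat; lia.
by move: h1; rewrite ltr_pdivrMr // mulrC.
Qed.
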